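(* Let $F:\mathbb{R}^d\to\mathbb{R}$ be strongly convex with convexity parameter $\tau>0$ and belong to $C^{1,1}(\mathbb{R}^d)$ with gradient-Lipschitz constant $L>0$, and let $\boldsymbol x^*$ be its global minimizer. Fix $M\ge1$ and $0<\sigma<1$, and let $C>0$ be a constant such that for every $\boldsymbol x\in\mathbb{R}^d$ and every unit vector $\boldsymbol\xi\in\mathbb{R}^d$, $$\big|\widetilde{\mathscr{D}}^M[G_\sigma(0\,|\,\boldsymbol x,\boldsymbol\xi)]-\mathscr{D}[G_\sigma(0\,|\,\boldsymbol x,\boldsymbol\xi)]\big|\le C\,\frac{M!\,\sqrt{\pi}}{2^M\,(2M)!}\,\sigma^{2M-1}.$$ Let $\boldsymbol x_0\in\mathbb{R}^d$ and define $\boldsymbol x_{t+1}=\boldsymbol x_t-\lambda\,\widetilde{\nabla}^M_{\sigma,\boldsymbol\Xi_t}[F](\boldsymbol x_t)$ for $t\ge0$, with $\lambda=1/(8L)$ and where each $\boldsymbol\Xi_t$ is an (arbitrary) orthonormal basis of $\mathbb{R}^d$. Then for every $t\ge0$, $$F(\boldsymbol x_t)-F(\boldsymbol x^* )\le\frac12 L\Big[\delta_\sigma+\Big(1-\frac{\tau}{16L}\Big)^t\big(\|\boldsymbol x_0-\boldsymbol x^*\|^2-\delta_\sigma\big)\Big],$$ where $$\delta_\sigma=\Big(\frac{128}{\tau^2}+\frac{16}{\tau L}\Big)L^2 d\,\sigma^2+\Big(\frac{8}{\tau^2}+\frac{1}{2\tau L}\Big)\frac{C^2(M!)^2\pi d}{4^M((2M)!)^2}\,\sigma^2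 .$$
   Context: $F\in C^{1,1}(\mathbb{R}^d)$ means there is $L>0$ with $\|\nabla F(\boldsymbol x+\boldsymbol\xi)-\nabla F(\boldsymbol x)\|\le L\|\boldsymbol\xi\|$ for all $\boldsymbol x,\boldsymbol\xi$; $\|\cdot\|$ is the Euclidean norm. $F$ is strongly convex with parameter $\tau>0$ if $F(\boldsymbol x+\boldsymbol\xi)\ge F(\boldsymbol x)+\langle\nabla F(\boldsymbol x),\boldsymbol\xi\rangle+\frac\tau2\|\boldsymbol\xi\|^2$ for all $\boldsymbol x,\boldsymbol\xi$. For $\boldsymbol x\in\mathbb{R}^d$ and a unit vector $\boldsymbol\xi$, set $G(y\,|\,\boldsymbol x,\boldsymbol\xi)=F(\boldsymbol x+y\boldsymbol\xi)$ for $y\in\mathbb{R}$, and $G_\sigma(y\,|\,\boldsymbol x,\boldsymbol\xi)=\mathbb{E}_{v\sim\mathcal N(0,1)}[G(y+\sigma v\,|\,\boldsymbol x,\boldsymbol\xi)]$. Its derivative at $0$ is $\mathscr{D}[G_\sigma(0\,|\,\boldsymbol x,\boldsymbol\xi)]=\frac1\sigma\mathbb{E}_{v\sim\mathcal N(0,1)}[G(\sigma v\,|\,\boldsymbol x,\boldsymbol\xi)\,v]$. The Gauss–Hermite estimator is $\widetilde{\mathscr{D}}^M[G_\sigma(0\,|\,\boldsymbol x,\boldsymbol\xi)]=\frac{1}{\sqrt\pi\,\sigma}\sum_{m=1}^M w_m F(\boldsymbol x+\sqrt2\sigma v_m\boldsymbol\xi)\sqrt2 v_m$, where $v_1,\ldots,v_M$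 are the roots of the $M$-th Hermite polynomial $H_M$ (physicists' convention, weight $e^{-v^2}$) and $w_m$ the corresponding Gauss–Hermite quadrature weights. For an orthonormal basis $\boldsymbol\Xi=(\boldsymbol\xi_1,\ldots,\boldsymbol\xi_d)$, the DGS estimator is $\widetilde{\nabla}^M_{\sigma,\boldsymbol\Xi}[F](\boldsymbol x)=\sum_{i=1}^d\widetilde{\mathscr{D}}^M[G_\sigma(0\,|\,\boldsymbol x,\boldsymbol\xi_i)]\,\boldsymbol\xi_i$. *)

(* Defs.v *)
From Stdlib Require Import Reals Factorial.
From mathcomp Require Import all_boot.
Set Implicit Arguments.
Unset Strict Implicit.
Open Scope R_scope.

Definition vec (d : nat) := 'I_d -> R.
Definition vadd {d} (x y : vec d) : vec d := fun i => x i + y i.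
Definition vsub {d} (x y : vec d) : vec d := fun i => x i - y i.
Definition vscale {d} (a : R) (x : vec d) : vec d := fun i => a * x i.
Definition dot {d} (x y : vec d) : R := \big[Rplus/0]_(i < d) (x i * y i).
Definition vnorm {d} (x : vec d) : R := sqrt (dot x x).
Definition vsum {d n} (f : 'I_n -> vec d) : vec d :=
  fun j => \big[Rplus/0]_(i < n) f i j.

Definition has_gradient {d} (F : vec d -> R) (g : vec d -> vec d) : Prop :=
  forall x eps, 0 < eps -> exists delta, 0 < delta /\
    forall h, vnorm h < delta ->
      Rabs (F (vadd x h) - F x - dot (g x) h) <= eps * vnorm h.

Definition grad_lipschitz {d} (g : vec d -> vec d) (L : R) : Prop :=
  forall x xi, vnorm (vsub (g (vadd x xi)) (g x)) <= L * vnorm xi.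

Definition strongly_convex {d} (F : vec d -> R) (g : vec d -> vec d) (tau : R) : Prop :=
  forall x xi, F (vadd x xi) >= F x + dot (g x) xi + tau / 2 * (vnorm xi) ^ 2.

Definition orthonormal_basis {d} (Xi : 'I_d -> vec d) : Prop :=
  forall i j, dot (Xi i) (Xi j) = if i == j then 1 else 0.

(** Physicists' Hermite polynomials: H_0 = 1, H_1 = 2x,
    H_{n+2} = 2x H_{n+1} - 2(n+1) H_n.  hermite_aux n x = (H_n x, H_{n+1} x). *)
Fixpoint hermite_aux (n : nat) (x : R) : R * R :=
  match n with
  | O => (1, 2 * x)
  | S k => let (a, b) := hermite_aux k x in (b, 2 * x * b - 2 * INR (S k) * a)
  end.
Definition hermite (n : nat) (x : R) : R := fst (hermite_aux n x).

Definition gh_nodes (M : nat) (nodes : list R) : Prop :=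
  List.NoDup nodes /\ forall y, List.In y nodes <-> hermite M y = 0.

(** Gauss-Hermite weight at node v (weight function e^{-v^2}) *)
Definition gh_weight (M : nat) (v : R) : R :=
  2 ^ (Nat.pred M) * INR (fact M) * sqrt PI
  / (INR M ^ 2 * (hermite (Nat.pred M) v) ^ 2).

(** Gauss-Hermite estimator  ~D^M[G_sigma(0 | x, xi)] *)
Definition gh_deriv {d} (M : nat) (nodes : list R) (F : vec d -> R)
  (sigma : R) (x xi : vec d) : R :=
  / (sqrt PI * sigma) *
  \big[Rplus/0]_(v <- nodes)
     (gh_weight M v * F (vadd x (vscale (sqrt 2 * sigma * v) xi)) * (sqrt 2 * v)).

Definition dgs {d} (M : nat) (nodes : list R) (F : vec d -> R) (sigma : R)
  (Xi : 'I_d -> vec d) (x : vec d) : vec d :=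
  vsum (fun i => vscale (gh_deriv M nodes F sigma x (Xi i)) (Xi i)).

Definition improper_integral (f : R -> R) (l : R) : Prop :=
  (forall a b, inhabited (Riemann_integrable f a b)) /\
  forall eps, 0 < eps -> exists A, forall a b (pr : Riemann_integrable f (- a) b),
    A <= a -> A <= b -> Rabs (RiemannInt pr - l) < eps.

Definition gauss_expect (g : R -> R) (l : R) : Prop :=
  improper_integral (fun v => g v * exp (- (v ^ 2) / 2) / sqrt (2 * PI)) l.

Definition delta_sigma (d M : nat) (tau L sigma C : R) : R :=
  (128 / tau ^ 2 + 16 / (tau * L)) * L ^ 2 * INR d * sigma ^ 2
  + (8 / tau ^ 2 + 1 / (2 * tau * L))
    * (C ^ 2 * (INR (fact M)) ^ 2 * PI * INR d
       / (4 ^ M * (INR (fact (2 * M))) ^ 2)) * sigma ^ 2.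

(* Main.v *)
Require Import Defs.
From HB Require Import structures.
From Stdlib Require Import Reals Factorial Lra Psatz FunctionalExtensionality.
From mathcomp Require Import all_boot.
From Coquelicot Require Import Coquelicot.
Open Scope R_scope.
Lemma Rplus_assoc' : associative Rplus. Proof. intros x y z. ring. Qed.
HB.instance Definition _ := Monoid.isComLaw.Build R 0 Rplus Rplus_assoc' Rplus_comm Rplus_0_l.
Lemma Rmult_0l' : left_zero 0 Rmult. Proof. intros x. ring. Qed.
Lemma Rmult_0r' : right_zero 0 Rmult. Proof. intros x. ring. Qed.
HB.instance Definition _ := Monoid.isMulLaw.Build R 0 Rmult Rmult_0l' Rmult_0r'.
Lemma Rdl : left_distributive Rmult Rplus. Proof. intros x y z. ring. Qed.
Lemma Rdr : right_distributive Rmult Rplus. Proof. intros x y z. ring. Qed.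
HB.instance Definition _ := Monoid.isAddLaw.Build R Rmult Rplus Rdl Rdr.

Lemma sum_recr (n : nat) (f : 'I_n.+1 -> R) : \big[Rplus/0]_(i < n.+1) f i =
  \big[Rplus/0]_(i < n) f (widen_ord (leqnSn n) i) + f ord_max.
Proof. rewrite big_ord_recr. reflexivity. Qed.

Lemma sum_add (n : nat) (f g : 'I_n -> R) :
  \big[Rplus/0]_(i < n) (f i + g i) = \big[Rplus/0]_(i < n) f i + \big[Rplus/0]_(i < n) g i.
Proof. rewrite big_split. reflexivity. Qed.

Lemma sum_scal (n : nat) (f : 'I_n -> R) k :
  \big[Rplus/0]_(i < n) (k * f i) = k * \big[Rplus/0]_(i < n) f i.
Proof. rewrite big_distrr. reflexivity. Qed.

Lemma sum_ext (n : nat) (f g : 'I_n -> R) : (forall i, f i = g i) ->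
  \big[Rplus/0]_(i < n) f i = \big[Rplus/0]_(i < n) g i.
Proof. intros H. apply eq_bigr. intros i _. apply H. Qed.

Lemma sum_le (n : nat) (f g : 'I_n -> R) : (forall i, f i <= g i) ->
  \big[Rplus/0]_(i < n) f i <= \big[Rplus/0]_(i < n) g i.
Proof.
  intros H. apply (big_rec2 (fun a b => a <= b)). lra.
  intros i a b _ Hab. pose proof (H i). lra.
Qed.

Lemma sum_const (n : nat) (c : R) : \big[Rplus/0]_(i < n) c = INR n * c.
Proof.
  elim: n => [|n IH]. rewrite big_ord0. simpl. ring.
  rewrite sum_recr IH S_INR. ring.
Qed.

Lemma sum_nonneg (n : nat) (f : 'I_n -> R) : (forall i, 0 <= f i) -> 0 <= \big[Rplus/0]_(i < n) f i.
Proof.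
  intros H. apply (big_rec (fun a => 0 <= a)). lra.
  intros i a _ Ha. pose proof (H i). lra.
Qed.

Lemma dot_comm d (x y : vec d) : dot x y = dot y x.
Proof. unfold dot. apply sum_ext. intros. ring. Qed.

Lemma dot_add_l d (x y z : vec d) : dot (vadd x y) z = dot x z + dot y z.
Proof. unfold dot, vadd. rewrite <- sum_add. apply sum_ext. intros. ring. Qed.

Lemma dot_sub_l d (x y z : vec d) : dot (vsub x y) z = dot x z - dot y z.
Proof.
  unfold dot, vsub. replace (\big[Rplus/0]_(i < d) (x i * z i) - \big[Rplus/0]_(i < d) (y i * z i))
    with (\big[Rplus/0]_(i < d) (x i * z i) + (-1) * \big[Rplus/0]_(i < d) (y i * z i)) by ring.
  rewrite <- sum_scal, <- sum_add. apply sum_ext. intros. ring.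
Qed.

Lemma dot_scale_l d a (x y : vec d) : dot (vscale a x) y = a * dot x y.
Proof. unfold dot, vscale. rewrite <- sum_scal. apply sum_ext. intros. ring. Qed.

Lemma dot_add_r d (x y z : vec d) : dot z (vadd x y) = dot z x + dot z y.
Proof. rewrite dot_comm dot_add_l (dot_comm _ x) (dot_comm _ y). reflexivity. Qed.

Lemma dot_sub_r d (x y z : vec d) : dot z (vsub x y) = dot z x - dot z y.
Proof. rewrite dot_comm dot_sub_l (dot_comm _ x) (dot_comm _ y). reflexivity. Qed.

Lemma dot_scale_r d a (x y : vec d) : dot y (vscale a x) = a * dot y x.
Proof. rewrite dot_comm dot_scale_l (dot_comm _ x). reflexivity. Qed.

Lemma dot_nonneg d (x : vec d) : 0 <= dot x x.
Proof. unfold dot. apply sum_nonneg. intros. apply Rle_0_sqr. Qed.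

Lemma vnorm_sq d (x : vec d) : vnorm x ^ 2 = dot x x.
Proof. unfold vnorm. rewrite pow2_sqrt. reflexivity. apply dot_nonneg. Qed.

Lemma vnorm_nonneg d (x : vec d) : 0 <= vnorm x.
Proof. apply sqrt_pos. Qed.

Lemma vnorm_scale d a (x : vec d) : vnorm (vscale a x) = Rabs a * vnorm x.
Proof.
  unfold vnorm. rewrite dot_scale_l dot_scale_r.
  replace (a * (a * dot x x)) with ((a * a) * dot x x) by ring.
  rewrite sqrt_mult_alt. change (a * a) with (Rsqr a). rewrite sqrt_Rsqr_abs. reflexivity.
  apply Rle_0_sqr.
Qed.

Lemma cs_sq d (x y : vec d) : dot x y ^ 2 <= dot x x * dot y y.
Proof.
  destruct (Req_dec (dot y y) 0) as [Hy|Hy].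
  - destruct (Req_dec (dot x y) 0) as [Hxy|Hxy].
    + rewrite Hxy Hy. lra.
    + exfalso. pose proof (dot_nonneg _ (vsub x (vscale ((dot x x + 1) / (2 * dot x y)) y))) as H.
      rewrite !dot_sub_l !dot_sub_r !dot_scale_l !dot_scale_r in H.
      rewrite (dot_comm _ y x) Hy in H.
      replace (dot x x - (dot x x + 1) / (2 * dot x y) * dot x y -
        ((dot x x + 1) / (2 * dot x y) * dot x y - (dot x x + 1) / (2 * dot x y) * ((dot x x + 1) / (2 * dot x y) * 0)))
        with (-1) in H by (field; auto). lra.
  - pose proof (dot_nonneg _ y). pose proof (dot_nonneg _ (vsub (vscale (dot y y) x) (vscale (dot x y) y))) as HH.
    rewrite !dot_sub_l !dot_sub_r !dot_scale_l !dot_scale_r in HH.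
    rewrite (dot_comm _ y x) in HH.
    assert (0 < dot y y) by lra.
    assert (0 <= dot y y * (dot y y * dot x x - dot x y ^ 2)) by nra.
    assert (0 <= dot y y * dot x x - dot x y ^ 2).
    { apply Rmult_le_reg_l with (dot y y). lra. nra. }
    nra.
Qed.

Lemma cs d (x y : vec d) : Rabs (dot x y) <= vnorm x * vnorm y.
Proof.
  unfold vnorm. rewrite <- sqrt_mult_alt. 2: apply dot_nonneg.
  rewrite <- sqrt_Rsqr_abs. apply sqrt_le_1_alt. unfold Rsqr.
  pose proof (cs_sq d x y). simpl in H. lra.
Qed.
Definition e2 (v : R) := exp (- (v ^ 2) / 2).

Lemma e2_pos v : 0 < e2 v.
Proof. apply exp_pos. Qed.

Lemma exd_cont (f : R -> R) x : ex_derive f x -> continuous f x.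
Proof. intros H. apply (ex_derive_continuous (K:=R_AbsRing) (V:=R_NormedModule)). exact H. Qed.

Lemma ex_RInt_cont (f : R -> R) a b : (forall z, Rmin a b <= z <= Rmax a b -> continuous f z) -> ex_RInt f a b.
Proof. intros H. apply (ex_RInt_continuous (V:=R_CompleteNormedModule)). exact H. Qed.

Lemma e2_cont v : continuous e2 v.
Proof. apply exd_cont. unfold e2. auto_derive. auto. Qed.

Lemma e2_sym v : e2 (- v) = e2 v.
Proof. unfold e2. replace ((- v) ^ 2) with (v ^ 2) by ring. reflexivity. Qed.

Lemma e2_le1 v : e2 v <= 1.
Proof.
  unfold e2. rewrite <- exp_0. destruct (Rle_lt_or_eq_dec _ _ (pow2_ge_0 v)) as [H|H].
  - left. apply exp_increasing. lra.
  - rewrite <- H. right. f_equal. lra.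
Qed.

Definition J (t : R) := RInt e2 0 t.

Lemma ex_RInt_e2 a b : ex_RInt e2 a b.
Proof. apply ex_RInt_cont. intros. apply e2_cont. Qed.

Lemma J_deriv t : is_derive J t (e2 t).
Proof.
  apply is_derive_RInt with 0.
  - apply filter_forall. intros b0. apply RInt_correct, ex_RInt_e2.
  - apply e2_cont.
Qed.

Definition uf (t x : R) := 2 * exp (- (t ^ 2 * (1 + x ^ 2)) / 2) / (1 + x ^ 2).
Definition U (t : R) := RInt (fun x => uf t x) 0 1.

Lemma onepx2 x : 0 < 1 + x ^ 2.
Proof. nra. Qed.

Lemma uf_deriv u x : is_derive (fun z => uf z x) u (-2 * u * exp (- (u ^ 2 * (1 + x ^ 2)) / 2)).
Proof.
  unfold uf. auto_derive.
  - pose proof (onepx2 x). lra.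
  - pose proof (onepx2 x).
    match goal with |- context [exp ?A] => replace A with (- (u ^ 2 * (1 + x ^ 2)) / 2) by field end.
    field. lra.
Qed.

Lemma uf_Derive u x : Derive (fun z => uf z x) u = -2 * u * exp (- (u ^ 2 * (1 + x ^ 2)) / 2).
Proof. apply is_derive_unique, uf_deriv. Qed.

Lemma uf_cont t x : continuous (uf t) x.
Proof. apply exd_cont. unfold uf. auto_derive. pose proof (onepx2 x). lra. Qed.

Lemma cont2_dU t x : continuity_2d_pt (fun u v => Derive (fun z => uf z v) u) t x.
Proof.
  apply continuity_2d_pt_ext with (fun u v => (-2 * u) * exp (- (u * u * (1 + v * v)) / 2)).
  { intros u v. rewrite uf_Derive. replace (u * u * (1 + v * v)) with (u ^ 2 * (1 + v ^ 2)) by ring. reflexivity. }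
  apply continuity_2d_pt_mult.
  - apply continuity_2d_pt_mult. apply continuity_2d_pt_const. apply continuity_2d_pt_id1.
  - apply continuity_1d_2d_pt_comp. apply derivable_continuous_pt, derivable_pt_exp.
    apply continuity_2d_pt_mult.
    + apply continuity_2d_pt_opp. apply continuity_2d_pt_mult.
      * apply continuity_2d_pt_mult. apply continuity_2d_pt_id1. apply continuity_2d_pt_id1.
      * apply continuity_2d_pt_plus. apply continuity_2d_pt_const.
        apply continuity_2d_pt_mult. apply continuity_2d_pt_id2. apply continuity_2d_pt_id2.
    + apply continuity_2d_pt_const.
Qed.

Lemma RInt_lin_scale t : RInt (fun x => t * e2 (t * x)) 0 1 = J t.
Proof.
  unfold J.
  pose proof (RInt_comp_lin e2 t 0 0 1) as H.
  replace (t * 0 + 0) with 0 in H by ring.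
  replace (t * 1 + 0) with t in H by ring.
  rewrite <- H. 2: apply ex_RInt_e2.
  apply RInt_ext. intros. rewrite Rplus_0_r. reflexivity.
Qed.

Lemma U_deriv t : is_derive U t (-2 * e2 t * J t).
Proof.
  unfold U.
  assert (H := is_derive_RInt_param uf 0 1 t).
  assert (E : RInt (fun x => Derive (fun u => uf u x) t) 0 1 = -2 * e2 t * J t).
  { rewrite <- RInt_lin_scale.
    rewrite (RInt_ext _ (fun x => scal (-2 * e2 t) (t * e2 (t * x)))).
    - rewrite RInt_scal. reflexivity.
      apply ex_RInt_cont. intros. apply exd_cont. unfold e2. auto_derive. auto.
    - intros x _. change (Derive (fun u => uf u x) t = (-2 * e2 t) * (t * e2 (t * x))). rewrite uf_Derive. unfold e2.
      replace (- (t ^ 2 * (1 + x ^ 2)) / 2) with (- (t ^ 2) / 2 + - ((t * x) ^ 2) / 2) by field.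
      rewrite exp_plus. ring. }
  rewrite <- E. apply H.
  - apply filter_forall. intros. eexists; apply uf_deriv. 
  - intros. apply cont2_dU.
  - apply filter_forall. intros. apply ex_RInt_cont. intros. apply uf_cont.
Qed.

Definition hh (t : R) := J t * J t + U t.

Lemma hh_deriv t : derivable_pt_lim hh t 0.
Proof.
  replace 0 with ((e2 t * J t + J t * e2 t) + (-2 * e2 t * J t)) by ring.
  apply derivable_pt_lim_plus.
  - apply derivable_pt_lim_mult; apply is_derive_Reals, J_deriv.
  - apply is_derive_Reals, U_deriv.
Qed.

Lemma hh_const t : hh t = hh 0.
Proof.
  destruct (MVT_gen hh 0 t (fun _ => 0)) as [c [_ Hc]].
  - intros. apply is_derive_Reals, hh_deriv.
  - intros. apply derivable_continuous_pt. exists 0. apply hh_deriv.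
  - lra.
Qed.

Lemma J0 : J 0 = 0.
Proof. unfold J. rewrite RInt_point. reflexivity. Qed.

Lemma U0 : U 0 = PI / 2.
Proof.
  unfold U.
  rewrite (RInt_ext _ (fun x => 2 * / (1 + x ^ 2))).
  - apply is_RInt_unique.
    replace (PI / 2) with (minus (2 * atan 1) (2 * atan 0)).
    2:{ rewrite atan_1 atan_0. unfold minus, plus, opp; simpl. field. }
    apply (is_RInt_derive (V:=R_CompleteNormedModule) (fun x => 2 * atan x)).
    + intros. apply is_derive_Reals. apply (derivable_pt_lim_scal atan 2). apply derivable_pt_lim_atan.
    + intros. apply exd_cont. auto_derive. pose proof (onepx2 x). lra.
  - intros x _. change (uf 0 x = 2 * / (1 + x ^ 2)). unfold uf.
    replace (- (0 ^ 2 * (1 + x ^ 2)) / 2) with 0 by field. rewrite exp_0. field.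
    pose proof (onepx2 x). lra.
Qed.

Lemma hh_val t : J t * J t + U t = PI / 2.
Proof. change (hh t = PI / 2). rewrite hh_const. unfold hh. rewrite J0 U0. ring. Qed.

Lemma U_bounds t : 0 <= U t <= 2 * e2 t.
Proof.
  unfold U. split.
  - apply RInt_ge_0. lra. apply ex_RInt_cont. intros. apply uf_cont.
    intros x _. unfold uf. pose proof (onepx2 x). pose proof (exp_pos (- (t ^ 2 * (1 + x ^ 2)) / 2)).
    apply Rmult_le_pos. lra. left. apply Rinv_0_lt_compat. lra.
  - replace (2 * e2 t) with (RInt (fun _ => 2 * e2 t) 0 1).
    2:{ rewrite RInt_const. change ((1 - 0) * (2 * e2 t) = 2 * e2 t). ring. }
    apply RInt_le. lra. apply ex_RInt_cont. intros. apply uf_cont.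
    apply ex_RInt_cont. intros. apply continuous_const.
    intros x Hx. unfold uf, e2. pose proof (onepx2 x).
    assert (exp (- (t ^ 2 * (1 + x ^ 2)) / 2) <= exp (- t ^ 2 / 2)).
    { destruct (Req_dec (- (t ^ 2 * (1 + x ^ 2)) / 2) (- t ^ 2 / 2)) as [E|E].
      rewrite E; lra. left. apply exp_increasing. pose proof (pow2_ge_0 t). pose proof (pow2_ge_0 x). nra. }
    pose proof (exp_pos (- (t ^ 2 * (1 + x ^ 2)) / 2)).
    apply Rmult_le_reg_r with (1 + x ^ 2). lra.
    unfold Rdiv. rewrite Rmult_assoc Rinv_l. 2: lra.
    pose proof (pow2_ge_0 x). nra.
Qed.

Lemma J_nonneg t : 0 <= t -> 0 <= J t.
Proof.
  intros Ht. unfold J. apply RInt_ge_0. lra. apply ex_RInt_e2. intros. left. apply e2_pos.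
Qed.

Lemma sqrtPI2_ge1 : 1 <= sqrt (PI / 2).
Proof. rewrite <- sqrt_1. apply sqrt_le_1_alt. pose proof PI2_1. lra. Qed.

Lemma J_tail t : 0 <= t -> Rabs (J t - sqrt (PI / 2)) <= 2 * e2 t.
Proof.
  intros Ht. pose proof (hh_val t) as H. pose proof (U_bounds t) as HU.
  pose proof (J_nonneg t Ht) as HJ. pose proof sqrtPI2_ge1 as Hs.
  set (s := sqrt (PI / 2)) in *.
  assert (Hss : s * s = PI / 2). { unfold s. apply sqrt_sqrt. pose proof PI2_RGT_0. lra. }
  assert (E : (J t - s) * (J t + s) = - U t) by nra.
  rewrite Rabs_left1.
  - nra.
  - nra.
Qed.

Lemma RInt_neg (f : R -> R) a : (forall x, continuous f x) ->
  RInt f (- a) 0 = RInt (fun y => f (- y)) 0 a.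
Proof.
  intros Hf.
  pose proof (RInt_comp_lin (V:=R_CompleteNormedModule) f (-1) 0 0 a) as H.
  replace (-1 * 0 + 0) with 0 in H by ring.
  replace (-1 * a + 0) with (- a) in H by ring.
  rewrite <- (opp_RInt_swap (V:=R_CompleteNormedModule)). 2: apply ex_RInt_cont; auto.
  rewrite <- H. 2: apply ex_RInt_cont; auto.
  rewrite (RInt_ext (V:=R_CompleteNormedModule) _ (fun y => opp (f (- y)))).
  - rewrite RInt_opp. apply opp_opp.
    apply ex_RInt_cont. intros. apply (continuous_comp (fun y => - y) f).
    apply exd_cont. auto_derive. auto. auto.
  - intros x _. change (-1 * f (-1 * x + 0) = - f (- x)). replace (-1 * x + 0) with (- x) by ring. ring.
Qed.

Lemma RInt_split (f : R -> R) a b : (forall x, continuous f x) ->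
  RInt f (- a) b = RInt f (- a) 0 + RInt f 0 b.
Proof.
  intros Hf. symmetry. apply (RInt_Chasles (V:=R_CompleteNormedModule)); apply ex_RInt_cont; auto.
Qed.

Definition s2p := sqrt (2 * PI).

Lemma s2p_eq : s2p = 2 * sqrt (PI / 2).
Proof.
  unfold s2p. apply sqrt_lem_1. pose proof PI_RGT_0. lra.
  pose proof (sqrt_pos (PI / 2)). lra.
  replace (2 * sqrt (PI / 2) * (2 * sqrt (PI / 2))) with (4 * (sqrt (PI / 2) * sqrt (PI / 2))) by ring.
  rewrite sqrt_sqrt. field. pose proof PI_RGT_0. lra.
Qed.

Lemma s2p_ge2 : 2 <= s2p.
Proof. rewrite s2p_eq. pose proof sqrtPI2_ge1. lra. Qed.

Lemma gauss0 a b : 0 <= a -> 0 <= b ->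
  Rabs (RInt e2 (- a) b - s2p) <= 2 * e2 a + 2 * e2 b.
Proof.
  intros Ha Hb. rewrite RInt_split. 2: apply e2_cont.
  rewrite RInt_neg. 2: apply e2_cont.
  rewrite (RInt_ext (V:=R_CompleteNormedModule) (fun y => e2 (- y)) e2).
  2:{ intros. apply e2_sym. }
  change (RInt e2 0 a) with (J a). change (RInt e2 0 b) with (J b).
  pose proof (J_tail a Ha). pose proof (J_tail b Hb). rewrite s2p_eq.
  replace (J a + J b - 2 * sqrt (PI / 2)) with ((J a - sqrt (PI / 2)) + (J b - sqrt (PI / 2))) by ring.
  eapply Rle_trans. apply Rabs_triang. lra.
Qed.

Lemma e2_ad x : exp (- (x * (x * 1)) * / 2) = e2 x.
Proof. reflexivity. Qed.

Lemma mom1 a b : RInt (fun v => v * e2 v) (- a) b = e2 a - e2 b.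
Proof.
  apply is_RInt_unique.
  replace (e2 a - e2 b) with (minus (- e2 b) (- e2 (- a))).
  2:{ rewrite e2_sym. unfold minus, plus, opp; simpl. ring. }
  apply (is_RInt_derive (V:=R_CompleteNormedModule) (fun v => - e2 v)).
  - intros x _. unfold e2. auto_derive. auto.
    rewrite e2_ad. fold (e2 x). field.
  - intros. apply exd_cont. unfold e2. auto_derive. auto.
Qed.

Lemma mom2 a b : RInt (fun v => v ^ 2 * e2 v) (- a) b = RInt e2 (- a) b - b * e2 b - a * e2 a.
Proof.
  assert (H : RInt (fun v => v ^ 2 * e2 v - e2 v) (- a) b = - b * e2 b - a * e2 a).
  { apply is_RInt_unique.
    replace (- b * e2 b - a * e2 a) with (minus (- b * e2 b) (- (- a) * e2 (- a))).
    2:{ rewrite e2_sym. unfold minus, plus, opp; simpl. ring. }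
    apply (is_RInt_derive (V:=R_CompleteNormedModule) (fun v => - v * e2 v)).
    - intros x _. unfold e2. auto_derive. auto.
      rewrite e2_ad. fold (e2 x). field.
    - intros. apply exd_cont. unfold e2. auto_derive. auto. }
  assert (H2 : RInt (fun v => v ^ 2 * e2 v - e2 v) (- a) b = RInt (fun v => v ^ 2 * e2 v) (- a) b - RInt e2 (- a) b).
  { apply (RInt_minus (V:=R_CompleteNormedModule)); apply ex_RInt_cont; intros; apply exd_cont; unfold e2; auto_derive; auto. }
  lra.
Qed.

Definition tl (a : R) := (1 + a ^ 2) * e2 a.

Lemma tl_ge_e2 a : e2 a <= tl a.
Proof. unfold tl. pose proof (e2_pos a). pose proof (pow2_ge_0 a). nra. Qed.

Lemma tl_ge_ae2 a : 0 <= a -> a * e2 a <= tl a.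
Proof. intros. unfold tl. pose proof (e2_pos a). assert (a <= 1 + a ^ 2) by nra. apply Rmult_le_compat_r; lra. Qed.

Lemma tl_nonneg a : 0 <= tl a.
Proof. pose proof (tl_ge_e2 a). pose proof (e2_pos a). lra. Qed.

Lemma tl_small eps : 0 < eps -> exists A, 0 <= A /\ forall a, A <= a -> tl a < eps.
Proof.
  intros He. exists (16 / eps + 1). split.
  { assert (0 < 16 / eps) by (apply Rdiv_lt_0_compat; lra). lra. }
  intros a Ha.
  assert (H16 : 0 < 16 / eps) by (apply Rdiv_lt_0_compat; lra).
  assert (Ea : exp (a ^ 2 / 2) = exp (a ^ 2 / 4) * exp (a ^ 2 / 4)).
  { rewrite <- exp_plus. f_equal. field. }
  pose proof (exp_ineq1_le (a ^ 2 / 4)) as H1.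
  assert (He2 : e2 a * exp (a ^ 2 / 2) = 1).
  { unfold e2. rewrite <- exp_plus. replace (- a ^ 2 / 2 + a ^ 2 / 2) with 0 by field. apply exp_0. }
  pose proof (pow2_ge_0 a). pose proof (e2_pos a).
  assert (Hb : exp (a ^ 2 / 2) >= (1 + a ^ 2 / 4) * (1 + a ^ 2 / 4)).
  { rewrite Ea. apply Rle_ge. apply Rmult_le_compat; lra. }
  assert (Ht : tl a * (4 + a ^ 2) <= 16).
  { unfold tl. assert (e2 a * ((1 + a ^ 2 / 4) * (1 + a ^ 2 / 4)) <= 1) by nra.
    nra. }
  assert (Ha2 : 16 / eps < 4 + a ^ 2) by nra.
  assert (16 < eps * (4 + a ^ 2)).
  { apply Rmult_lt_compat_l with (r := eps) in Ha2. 2: lra.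
    unfold Rdiv in Ha2. rewrite <- Rmult_assoc, (Rmult_comm eps 16), Rmult_assoc, Rinv_r in Ha2; lra. }
  nra.
Qed.

Lemma improper_of_bound (f : R -> R) l K : 0 <= K -> (forall x, continuous f x) ->
  (forall a b, 0 <= a -> 0 <= b -> Rabs (RInt f (- a) b - l) <= K * (tl a + tl b)) ->
  improper_integral f l.
Proof.
  intros HK Hf Hb. split.
  - intros a b. constructor. apply ex_RInt_Reals_0. apply ex_RInt_cont. auto.
  - intros eps He.
    destruct (tl_small (eps / (2 * K + 1))) as [A [HA0 HA]].
    { apply Rdiv_lt_0_compat; lra. }
    exists A. intros a b pr Ha Hb'.
    rewrite <- RInt_Reals.
    eapply Rle_lt_trans. apply Hb; lra.
    pose proof (HA a Ha). pose proof (HA b Hb').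
    assert (Hq : (2 * K + 1) * (eps / (2 * K + 1)) = eps) by (field; lra).
    pose proof (tl_nonneg a). pose proof (tl_nonneg b).
    nra.
Qed.

Lemma abs_le_cases x c : Rabs x <= c -> - c <= x <= c.
Proof. intros H. pose proof (Rle_abs x). pose proof (Rle_abs (- x)). rewrite Rabs_Ropp in H1. lra. Qed.

Definition T3 (b : R) := (b ^ 2 + 2) * e2 b.

Lemma T3_nonneg b : 0 <= T3 b.
Proof. unfold T3. pose proof (e2_pos b). pose proof (pow2_ge_0 b). nra. Qed.

Lemma T3_le_tl b : T3 b <= 2 * tl b.
Proof. unfold T3, tl. pose proof (e2_pos b). pose proof (pow2_ge_0 b). nra. Qed.

Lemma T30 : T3 0 = 2.
Proof. unfold T3, e2. replace (- 0 ^ 2 / 2) with 0 by field. rewrite exp_0. ring. Qed.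

Lemma mom3 b1 b2 : RInt (fun v => v ^ 3 * e2 v) b1 b2 = T3 b1 - T3 b2.
Proof.
  apply is_RInt_unique.
  replace (T3 b1 - T3 b2) with (minus (- T3 b2) (- T3 b1)).
  2:{ unfold minus, plus, opp; simpl. ring. }
  apply (is_RInt_derive (V:=R_CompleteNormedModule) (fun v => - T3 v)).
  - intros x _. unfold T3, e2. auto_derive. auto.
    rewrite e2_ad. fold (e2 x). field.
  - intros. apply exd_cont. unfold e2. auto_derive. auto.
Qed.

Lemma cmp_step (h : R -> R) K b1 b2 : (forall x, continuous h x) ->
  (forall v, 0 <= v -> Rabs (h v) <= K * v ^ 3 * e2 v) -> 0 <= b1 -> b1 <= b2 ->
  Rabs (RInt h 0 b2 - RInt h 0 b1) <= K * (T3 b1 - T3 b2).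
Proof.
  intros Hc Hh H1 H12.
  assert (E : RInt h 0 b2 - RInt h 0 b1 = RInt h b1 b2).
  { rewrite <- (RInt_Chasles (V:=R_CompleteNormedModule) h 0 b1 b2).
    change (RInt h 0 b1 + RInt h b1 b2 - RInt h 0 b1 = RInt h b1 b2). ring.
    apply ex_RInt_cont; auto. apply ex_RInt_cont; auto. }
  rewrite E. eapply Rle_trans. apply abs_RInt_le. auto. apply ex_RInt_cont; auto.
  rewrite <- mom3.
  rewrite <- (RInt_scal (V:=R_CompleteNormedModule)).
  2:{ apply ex_RInt_cont. intros. apply exd_cont. unfold e2. auto_derive. auto. }
  apply RInt_le.
  - auto.
  - apply ex_RInt_cont. intros. apply (continuous_comp h Rabs). auto. apply continuous_Rabs.
  - apply ex_RInt_cont. intros. apply (continuous_scal_r K (fun x => x ^ 3 * e2 x)). apply exd_cont. unfold e2. auto_derive. auto.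
  - intros x Hx. change (Rabs (h x) <= K * (x ^ 3 * e2 x)). rewrite <- Rmult_assoc. apply Hh. lra.
Qed.

Lemma cmp_right (h : R -> R) K : 0 <= K -> (forall x, continuous h x) ->
  (forall v, 0 <= v -> Rabs (h v) <= K * v ^ 3 * e2 v) ->
  exists lp, Rabs lp <= 2 * K /\ forall b, 0 <= b -> Rabs (RInt h 0 b - lp) <= K * T3 b.
Proof.
  intros HK Hc Hh.
  set (P := fun b => RInt h 0 b).
  assert (HP0 : P 0 = 0). { unfold P. rewrite RInt_point. reflexivity. }
  assert (HS : forall b b', 0 <= b -> b <= b' -> Rabs (P b' - P b) <= K * (T3 b - T3 b')).
  { intros. apply cmp_step; auto. }
  assert (Hub : forall b b', 0 <= b -> 0 <= b' -> P b' - K * T3 b' <= P b + K * T3 b).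
  { intros b b' Hb Hb'. pose proof (T3_nonneg b). pose proof (T3_nonneg b').
    destruct (Rle_dec b b') as [Hl|Hl].
    - pose proof (HS b b' Hb Hl) as HH. apply abs_le_cases in HH. nra.
    - pose proof (HS b' b Hb' ltac:(lra)) as HH. apply abs_le_cases in HH. nra. }
  set (E := fun y => exists b, 0 <= b /\ y = P b - K * T3 b).
  destruct (completeness E) as [lp [Hlp1 Hlp2]].
  { exists (P 0 + K * T3 0). intros y [b [Hb ->]]. apply Hub; lra. }
  { exists (P 0 - K * T3 0). exists 0. split; lra. }
  assert (Hlo : forall b, 0 <= b -> P b - K * T3 b <= lp).
  { intros b Hb. apply Hlp1. exists b. split; auto. }
  assert (Hhi : forall b, 0 <= b -> lp <= P b + K * T3 b).
  { intros b Hb. apply Hlp2. intros y [b' [Hb' ->]]. apply Hub; auto. }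
  exists lp. split.
  - pose proof (Hlo 0 (Rle_refl _)) as Ha. pose proof (Hhi 0 (Rle_refl _)) as Hb.
    rewrite HP0 T30 in Ha Hb. apply Rabs_le. lra.
  - intros b Hb. pose proof (Hlo b Hb). pose proof (Hhi b Hb). fold (P b). apply Rabs_le. lra.
Qed.

Lemma cmp_full (h : R -> R) K : 0 <= K -> (forall x, continuous h x) ->
  (forall v, Rabs (h v) <= K * Rabs v ^ 3 * e2 v) ->
  exists l, Rabs l <= 4 * K /\ forall a b, 0 <= a -> 0 <= b ->
    Rabs (RInt h (- a) b - l) <= 2 * K * (tl a + tl b).
Proof.
  intros HK Hc Hh.
  assert (Hc' : forall x, continuous (fun y => h (- y)) x).
  { intros. apply (continuous_comp (fun y => - y) h). apply exd_cont. auto_derive. auto. auto. }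
  destruct (cmp_right h K HK Hc) as [l1 [Hl1 Hb1]].
  { intros v Hv. rewrite <- (Rabs_pos_eq v) at 2; auto. }
  destruct (cmp_right (fun y => h (- y)) K HK Hc') as [l2 [Hl2 Hb2]].
  { intros v Hv. rewrite <- (Rabs_pos_eq v) at 2; auto. rewrite <- (Rabs_Ropp v). rewrite <- (e2_sym v). apply Hh. }
  exists (l2 + l1). split.
  - eapply Rle_trans. apply Rabs_triang. lra.
  - intros a b Ha Hb. rewrite RInt_split; auto. rewrite RInt_neg; auto.
    pose proof (Hb1 b Hb). pose proof (Hb2 a Ha).
    pose proof (T3_le_tl a). pose proof (T3_le_tl b).
    replace (RInt (fun y => h (- y)) 0 a + RInt h 0 b - (l2 + l1)) with
      ((RInt (fun y => h (- y)) 0 a - l2) + (RInt h 0 b - l1)) by ring.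
    eapply Rle_trans. apply Rabs_triang. nra.
Qed.

Lemma vec_ext d (x y : vec d) : (forall i, x i = y i) -> x = y.
Proof. intros H. apply functional_extensionality. exact H. Qed.

Lemma vadd_scale_comb d (y xi : vec d) s h :
  vadd (vadd y (vscale s xi)) (vscale h xi) = vadd y (vscale (s + h) xi).
Proof. apply vec_ext. intros i. unfold vadd, vscale. ring. Qed.

Lemma vadd_scale0 d (y xi : vec d) : vadd y (vscale 0 xi) = y.
Proof. apply vec_ext. intros i. unfold vadd, vscale. ring. Qed.

Lemma vscale1 d (xi : vec d) : vscale 1 xi = xi.
Proof. apply vec_ext. intros i. unfold vscale. ring. Qed.

Lemma G_deriv d (F : vec d -> R) gF (y xi : vec d) s : has_gradient F gF ->
  is_derive (fun s => F (vadd y (vscale s xi))) s (dot (gF (vadd y (vscale s xi))) xi).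
Proof.
  intros HG. apply is_derive_Reals. intros eps He.
  set (x0 := vadd y (vscale s xi)).
  pose proof (vnorm_nonneg _ xi) as Hn.
  destruct (HG x0 (eps / (2 * (vnorm xi + 1)))) as [delta [Hd Hdel]].
  { apply Rdiv_lt_0_compat; lra. }
  assert (Hd' : 0 < delta / (vnorm xi + 1)) by (apply Rdiv_lt_0_compat; lra).
  exists (mkposreal _ Hd'). intros h Hh0 Hh. simpl in Hh.
  assert (Hhn : vnorm (vscale h xi) < delta).
  { rewrite vnorm_scale. apply Rlt_le_trans with (delta / (vnorm xi + 1) * (vnorm xi + 1)).
    - pose proof (Rabs_pos h). nra.
    - right. field. lra. }
  pose proof (Hdel _ Hhn) as H.
  rewrite vadd_scale_comb in H. fold x0 in H.
  rewrite dot_scale_r vnorm_scale in H.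
  assert (Hah : 0 < Rabs h) by (apply Rabs_pos_lt; auto).
  replace ((F (vadd y (vscale (s + h) xi)) - F x0) / h - dot (gF x0) xi)
    with ((F (vadd y (vscale (s + h) xi)) - F x0 - h * dot (gF x0) xi) / h) by (field; auto).
  rewrite Rabs_div; auto.
  apply Rmult_lt_reg_r with (Rabs h). auto.
  unfold Rdiv. rewrite Rmult_assoc Rinv_l. 2: lra. rewrite Rmult_1_r.
  eapply Rle_lt_trans. apply H.
  assert (eps / (2 * (vnorm xi + 1)) * vnorm xi < eps).
  { apply Rmult_lt_reg_r with (2 * (vnorm xi + 1)). lra.
    unfold Rdiv. replace (eps * / (2 * (vnorm xi + 1)) * vnorm xi * (2 * (vnorm xi + 1))) with (eps * vnorm xi) by (field; lra).
    nra. }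
  nra.
Qed.

Lemma taylor_gen (G dG : R -> R) a c s : (forall u, is_derive G u (dG u)) -> dG 0 = a ->
  (forall u, Rabs (dG u - a) <= c * Rabs u) -> Rabs (G s - G 0 - a * s) <= c / 2 * s ^ 2.
Proof.
  intros HD H0 HL.
  assert (Hcont : forall u, continuity_pt G u).
  { intros u. apply derivable_continuous_pt. exists (dG u). apply is_derive_Reals, HD. }
  assert (key : forall xi, Rmin 0 s <= xi <= Rmax 0 s -> Rabs ((dG xi - a) * s) <= c * xi * s).
  { intros xi Hxi. rewrite Rabs_mult.
    assert (Hxs : Rabs xi * Rabs s = xi * s).
    { rewrite <- Rabs_mult. apply Rabs_pos_eq.
      unfold Rmin, Rmax in Hxi. destruct (Rle_dec 0 s); nra. }
    apply Rle_trans with (c * Rabs xi * Rabs s).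
    apply Rmult_le_compat_r. apply Rabs_pos. apply HL.
    rewrite Rmult_assoc Hxs. right; ring. }
  apply Rabs_le. split.
  - destruct (MVT_gen (fun u => G u - G 0 - a * u + c / 2 * u ^ 2) 0 s (fun u => dG u - a + c * u)) as [xi [Hxi E]].
    + intros x _. apply is_derive_Reals.
      replace (dG x - a + c * x) with (dG x - 0 - a * 1 + c / 2 * (INR 2 * x ^ 1)) by (simpl; field).
      apply derivable_pt_lim_plus. apply derivable_pt_lim_minus. apply derivable_pt_lim_minus.
      apply is_derive_Reals, HD. apply derivable_pt_lim_const.
      apply (derivable_pt_lim_scal id a x 1). apply derivable_pt_lim_id.
      apply (derivable_pt_lim_scal (fun u => u ^ 2) (c / 2) x). apply derivable_pt_lim_pow.
    + intros x _. apply continuity_pt_plus. apply continuity_pt_minus. apply continuity_pt_minus.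
      apply Hcont. apply continuity_pt_const. intros ? ?; reflexivity.
      apply continuity_pt_scal. apply derivable_continuous_pt. apply derivable_pt_id.
      apply continuity_pt_scal. apply derivable_continuous_pt. apply derivable_pt_pow.
    + pose proof (key xi Hxi) as K. apply abs_le_cases in K.
      simpl in E. rewrite Rmult_0_r Rmult_0_l Rmult_0_r in E. nra.
  - destruct (MVT_gen (fun u => G u - G 0 - a * u - c / 2 * u ^ 2) 0 s (fun u => dG u - a - c * u)) as [xi [Hxi E]].
    + intros x _. apply is_derive_Reals.
      replace (dG x - a - c * x) with (dG x - 0 - a * 1 - c / 2 * (INR 2 * x ^ 1)) by (simpl; field).
      apply derivable_pt_lim_minus. apply derivable_pt_lim_minus. apply derivable_pt_lim_minus.
      apply is_derive_Reals, HD. apply derivable_pt_lim_const.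
      apply (derivable_pt_lim_scal id a x 1). apply derivable_pt_lim_id.
      apply (derivable_pt_lim_scal (fun u => u ^ 2) (c / 2) x). apply derivable_pt_lim_pow.
    + intros x _. apply continuity_pt_minus. apply continuity_pt_minus. apply continuity_pt_minus.
      apply Hcont. apply continuity_pt_const. intros ? ?; reflexivity.
      apply continuity_pt_scal. apply derivable_continuous_pt. apply derivable_pt_id.
      apply continuity_pt_scal. apply derivable_continuous_pt. apply derivable_pt_pow.
    + pose proof (key xi Hxi) as K. apply abs_le_cases in K.
      simpl in E. rewrite Rmult_0_r Rmult_0_l Rmult_0_r in E. nra.
Qed.

Lemma taylor_F d (F : vec d -> R) gF L (y xi : vec d) s : has_gradient F gF -> grad_lipschitz gF L ->
  Rabs (F (vadd y (vscale s xi)) - F y - dot (gF y) xi * s) <= L * vnorm xi ^ 2 / 2 * s ^ 2.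
Proof.
  intros HG HL.
  pose proof (taylor_gen (fun s => F (vadd y (vscale s xi))) (fun s => dot (gF (vadd y (vscale s xi))) xi)
    (dot (gF y) xi) (L * vnorm xi ^ 2) s) as H.
  simpl in H. rewrite vadd_scale0 in H.
  replace (L * vnorm xi ^ 2 / 2) with (L * vnorm xi ^ 2 * / 2) by field.
  apply H.
  - intros u. apply G_deriv. auto.
  - rewrite ?vadd_scale0. reflexivity.
  - intros u. rewrite <- dot_sub_l. eapply Rle_trans. apply cs.
    pose proof (HL y (vscale u xi)) as Hl. rewrite vnorm_scale in Hl.
    pose proof (vnorm_nonneg _ xi). pose proof (vnorm_nonneg _ (vsub (gF (vadd y (vscale u xi))) (gF y))).
    pose proof (Rabs_pos u). nra.
Qed.

Lemma descent d (F : vec d -> R) gF L (x xi : vec d) : has_gradient F gF -> grad_lipschitz gF L ->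
  F (vadd x xi) <= F x + dot (gF x) xi + L / 2 * vnorm xi ^ 2.
Proof.
  intros HG HL. pose proof (taylor_F d F gF L x xi 1 HG HL) as H.
  rewrite vscale1 in H. apply abs_le_cases in H. nra.
Qed.

Lemma cont_of_pt (f : R -> R) x : continuity_pt f x -> continuous f x.
Proof. intros H. apply continuity_pt_filterlim. exact H. Qed.

Lemma pt_of_cont (f : R -> R) x : continuous f x -> continuity_pt f x.
Proof. intros H. apply continuity_pt_filterlim. exact H. Qed.

Lemma RInt_lin3 (f1 f2 f3 : R -> R) c1 c2 k a b :
  (forall x, continuous f1 x) -> (forall x, continuous f2 x) -> (forall x, continuous f3 x) ->
  RInt (fun v => (c1 * f1 v + c2 * f2 v + f3 v) * k) a b = (c1 * RInt f1 a b + c2 * RInt f2 a b + RInt f3 a b) * k.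
Proof.
  intros H1 H2 H3.
  assert (E1 : ex_RInt f1 a b) by (apply ex_RInt_cont; auto).
  assert (E2 : ex_RInt f2 a b) by (apply ex_RInt_cont; auto).
  assert (E3 : ex_RInt f3 a b) by (apply ex_RInt_cont; auto).
  rewrite (RInt_ext (V:=R_CompleteNormedModule) _ (fun v => scal k (plus (plus (scal c1 (f1 v)) (scal c2 (f2 v))) (f3 v)))).
  2:{ intros. change ((c1 * f1 x + c2 * f2 x + f3 x) * k = k * ((c1 * f1 x + c2 * f2 x) + f3 x)). ring. }
  rewrite (RInt_scal (V:=R_CompleteNormedModule)).
  rewrite (RInt_plus (V:=R_CompleteNormedModule)).
  rewrite (RInt_plus (V:=R_CompleteNormedModule)).
  rewrite (RInt_scal (V:=R_CompleteNormedModule)).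
  rewrite (RInt_scal (V:=R_CompleteNormedModule)).
  change (k * (c1 * RInt f1 a b + c2 * RInt f2 a b + RInt f3 a b) = (c1 * RInt f1 a b + c2 * RInt f2 a b + RInt f3 a b) * k). ring.
  all: try assumption.
  - apply (ex_RInt_scal (V:=R_NormedModule)). assumption.
  - apply (ex_RInt_scal (V:=R_NormedModule)). assumption.
  - apply (ex_RInt_plus (V:=R_NormedModule)); apply (ex_RInt_scal (V:=R_NormedModule)); assumption.
  - apply (ex_RInt_plus (V:=R_NormedModule)). apply (ex_RInt_plus (V:=R_NormedModule)); apply (ex_RInt_scal (V:=R_NormedModule)); assumption. assumption.
Qed.

Lemma smooth_err d (F : vec d -> R) gF L sigma (y xi : vec d) :
  has_gradient F gF -> grad_lipschitz gF L -> 0 <= L -> 0 < sigma -> vnorm xi = 1 ->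
  exists l, gauss_expect (fun v => F (vadd y (vscale (sigma * v) xi)) * v) l /\
    Rabs (l / sigma - dot (gF y) xi) <= L * sigma.
Proof.
  intros HG HL HL0 Hs Hxi.
  set (G := fun s => F (vadd y (vscale s xi))).
  assert (Gc : forall s, continuity_pt G s).
  { intros s. apply pt_of_cont. apply exd_cont. eexists. apply (G_deriv d F gF). exact HG. }
  set (a := dot (gF y) xi). set (G0 := F y).
  assert (HT : forall v, Rabs (G (sigma * v) - G0 - a * (sigma * v)) <= L / 2 * (sigma * v) ^ 2).
  { intros v. pose proof (taylor_F d F gF L y xi (sigma * v) HG HL) as H.
    rewrite Hxi in H. unfold G, G0, a.
    replace (L / 2 * (sigma * v) ^ 2) with (L * 1 ^ 2 / 2 * (sigma * v) ^ 2) by field. exact H. }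
  set (h := fun v => (G (sigma * v) - G0 - a * (sigma * v)) * v * e2 v).
  assert (Gsc : forall v, continuity_pt (fun v => G (sigma * v)) v).
  { intros v. apply (continuity_pt_comp (fun v => sigma * v) G).
    apply derivable_continuous_pt. apply derivable_pt_scal. apply derivable_pt_id. apply Gc. }
  assert (e2c : forall v, continuity_pt e2 v) by (intros; apply pt_of_cont, e2_cont).
  assert (hc : forall v, continuous h v).
  { intros v. apply cont_of_pt. unfold h.
    apply continuity_pt_mult. apply continuity_pt_mult.
    apply continuity_pt_minus. apply continuity_pt_minus. apply Gsc. apply continuity_pt_const. intros ? ?; reflexivity.
    apply continuity_pt_scal. apply continuity_pt_scal. apply derivable_continuous_pt. apply derivable_pt_id.
    apply derivable_continuous_pt. apply derivable_pt_id. apply e2c. }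
  set (K := L * sigma ^ 2 / 2).
  assert (HK : 0 <= K) by (unfold K; pose proof (pow2_ge_0 sigma); nra).
  destruct (cmp_full h K HK hc) as [lh [Hlh Hbh]].
  { intros v. unfold h. rewrite !Rabs_mult. rewrite (Rabs_pos_eq (e2 v)). 2: left; apply e2_pos.
    pose proof (HT v) as H. pose proof (e2_pos v). pose proof (Rabs_pos v).
    replace (K * Rabs v ^ 3 * e2 v) with ((L / 2 * (sigma * v) ^ 2) * Rabs v * e2 v).
    2:{ unfold K. replace ((sigma * v) ^ 2) with (sigma ^ 2 * Rabs v ^ 2). field. rewrite pow2_abs. ring. }
    apply Rmult_le_compat_r. lra. apply Rmult_le_compat_r. lra. exact H. }
  pose proof s2p_ge2 as Hs2.
  exists (a * sigma + lh / s2p). split.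
  - unfold gauss_expect.
    change (improper_integral (fun v => G (sigma * v) * v * e2 v / s2p) (a * sigma + lh / s2p)).
    apply improper_of_bound with ((Rabs G0 + 3 * Rabs (a * sigma) + 2 * K) / s2p).
    + apply Rmult_le_pos. pose proof (Rabs_pos G0). pose proof (Rabs_pos (a * sigma)). lra.
      left. apply Rinv_0_lt_compat. lra.
    + intros v. apply cont_of_pt. unfold Rdiv. apply continuity_pt_mult. apply continuity_pt_mult.
      apply continuity_pt_mult. apply Gsc. apply derivable_continuous_pt. apply derivable_pt_id. apply e2c.
      apply continuity_pt_const. intros ? ?; reflexivity.
    + intros a' b Ha Hb.
      rewrite (RInt_ext (V:=R_CompleteNormedModule) _ (fun v => (G0 * (v * e2 v) + (a * sigma) * (v ^ 2 * e2 v) + h v) * / s2p)).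
      2:{ intros x _. change (G (sigma * x) * x * e2 x / s2p = (G0 * (x * e2 x) + (a * sigma) * (x ^ 2 * e2 x) + h x) * / s2p).
          unfold h. field. lra. }
      rewrite RInt_lin3.
      2,3: intros; apply exd_cont; unfold e2; auto_derive; auto.
      2: exact hc.
      rewrite mom1 mom2.
      pose proof (gauss0 a' b Ha Hb) as Hg. pose proof (Hbh a' b Ha Hb) as Hh.
      pose proof (tl_ge_e2 a'). pose proof (tl_ge_e2 b). pose proof (tl_ge_ae2 a' Ha). pose proof (tl_ge_ae2 b Hb).
      pose proof (e2_pos a'). pose proof (e2_pos b).
      set (A := a * sigma) in *.
      replace ((G0 * (e2 a' - e2 b) + A * (RInt e2 (- a') b - b * e2 b - a' * e2 a') + RInt h (- a') b) * / s2p - (A + lh / s2p))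
        with ((G0 * (e2 a' - e2 b) + A * ((RInt e2 (- a') b - s2p) - b * e2 b - a' * e2 a') + (RInt h (- a') b - lh)) / s2p)
        by (field; lra).
      rewrite Rabs_div. 2: lra. rewrite (Rabs_pos_eq s2p). 2: lra.
      replace ((Rabs G0 + 3 * Rabs A + 2 * K) / s2p * (tl a' + tl b)) with
        ((Rabs G0 + 3 * Rabs A + 2 * K) * (tl a' + tl b) * / s2p) by (field; lra).
      unfold Rdiv. apply Rmult_le_compat_r. left. apply Rinv_0_lt_compat. lra.
      eapply Rle_trans. apply Rabs_triang. eapply Rle_trans. apply Rplus_le_compat_r. apply Rabs_triang.
      rewrite (Rabs_mult G0) (Rabs_mult A).
      assert (Rabs (e2 a' - e2 b) <= tl a' + tl b).
      { apply Rabs_le. lra. }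
      assert (Rabs (RInt e2 (- a') b - s2p - b * e2 b - a' * e2 a') <= 3 * (tl a' + tl b)).
      { eapply Rle_trans. apply Rabs_triang. rewrite Rabs_Ropp.
        eapply Rle_trans. apply Rplus_le_compat_r. apply Rabs_triang. rewrite Rabs_Ropp.
        rewrite (Rabs_pos_eq (b * e2 b)). 2: nra. rewrite (Rabs_pos_eq (a' * e2 a')). 2: nra. lra. }
      pose proof (Rabs_pos G0). pose proof (Rabs_pos A).
      pose proof (tl_nonneg a'). pose proof (tl_nonneg b).
      apply Rle_trans with (Rabs G0 * (tl a' + tl b) + Rabs A * (3 * (tl a' + tl b)) + 2 * K * (tl a' + tl b)).
      + apply Rplus_le_compat. apply Rplus_le_compat.
        apply Rmult_le_compat_l; assumption. apply Rmult_le_compat_l; assumption. exact Hh.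
      + right; ring.
  - unfold a. replace ((dot (gF y) xi * sigma + lh / s2p) / sigma - dot (gF y) xi) with (lh / (s2p * sigma)) by (field; lra).
    rewrite Rabs_div. 2: nra. rewrite (Rabs_pos_eq (s2p * sigma)). 2: nra.
    apply Rmult_le_reg_r with (s2p * sigma). nra.
    unfold Rdiv. rewrite Rmult_assoc Rinv_l. 2: nra. rewrite Rmult_1_r.
    apply Rle_trans with (4 * K). exact Hlh.
    unfold K. replace (4 * (L * sigma ^ 2 / 2)) with (L * sigma * (2 * sigma)) by (simpl; field).
    apply Rmult_le_compat_l. nra. nra.
Qed.

Lemma vnorm_sq_scale d a (x : vec d) : vnorm (vscale a x) ^ 2 = a * a * dot x x.
Proof. rewrite vnorm_sq dot_scale_l dot_scale_r. ring. Qed.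

Lemma grad_star_zero d (F : vec d -> R) gF L xstar : has_gradient F gF -> grad_lipschitz gF L -> 0 < L ->
  (forall y, F xstar <= F y) -> forall u, dot (gF xstar) u = 0.
Proof.
  move=> HG HL HL0 Hmin u.
  set g := gF xstar.
  have H := descent d F gF L xstar (vscale (- / L) g) HG HL.
  have H2 := Hmin (vadd xstar (vscale (- / L) g)).
  rewrite vnorm_sq_scale dot_scale_r in H.
  have Hgg : dot g g = 0.
  { have Hn := dot_nonneg _ g.
    have E : - / L * dot g g + L / 2 * (- / L * - / L * dot g g) = - (dot g g) / (2 * L) by field; lra.
    rewrite -/g in H. 
    have : 0 <= - (dot g g) / (2 * L) by lra.
    move=> H3. have : dot g g / (2 * L) <= 0 by lra.
    move=> H4. apply Rle_antisym; last by exact Hn.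
    have H5 : 0 < / (2 * L) by apply Rinv_0_lt_compat; lra.
    rewrite /Rdiv in H4. nra. }
  have Hc := cs d g u. rewrite /vnorm Hgg sqrt_0 Rmult_0_l in Hc.
  have := Rabs_pos (dot g u). move=> Hp.
  apply Rabs_eq_0. lra.
Qed.

Lemma gap_upper d (F : vec d -> R) gF L xstar x : has_gradient F gF -> grad_lipschitz gF L -> 0 < L ->
  (forall y, F xstar <= F y) -> F x - F xstar <= L / 2 * vnorm (vsub x xstar) ^ 2.
Proof.
  move=> HG HL HL0 Hmin.
  have H := descent d F gF L xstar (vsub x xstar) HG HL.
  have E : vadd xstar (vsub x xstar) = x by apply vec_ext => i; rewrite /vadd /vsub; ring.
  rewrite E (grad_star_zero d F gF L xstar HG HL HL0 Hmin) in H. lra.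
Qed.

Lemma grad_sq d (F : vec d -> R) gF L xstar x : has_gradient F gF -> grad_lipschitz gF L -> 0 < L ->
  (forall y, F xstar <= F y) -> dot (gF x) (gF x) <= 2 * L * (F x - F xstar).
Proof.
  move=> HG HL HL0 Hmin.
  set g := gF x.
  have H := descent d F gF L x (vscale (- / L) g) HG HL.
  have H2 := Hmin (vadd x (vscale (- / L) g)).
  rewrite vnorm_sq_scale dot_scale_r -/g in H.
  have E : - / L * dot g g + L / 2 * (- / L * - / L * dot g g) = - (dot g g) / (2 * L) by field; lra.
  have H3 : dot g g / (2 * L) <= F x - F xstar by lra.
  have H4 : dot g g = 2 * L * (dot g g / (2 * L)) by field; lra.
  rewrite H4. apply Rmult_le_compat_l; lra.
Qed.

Lemma vsub_swap_norm d (x y : vec d) : vnorm (vsub y x) = vnorm (vsub x y).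
Proof.
  have E : vsub y x = vscale (-1) (vsub x y) by apply vec_ext => i; rewrite /vsub /vscale; ring.
  rewrite E vnorm_scale Rabs_Ropp Rabs_R1. ring.
Qed.

Lemma strong_ineq d (F : vec d -> R) gF tau xstar x : strongly_convex F gF tau ->
  dot (gF x) (vsub x xstar) >= F x - F xstar + tau / 2 * vnorm (vsub x xstar) ^ 2.
Proof.
  move=> HS.
  have H := HS x (vsub xstar x).
  have E : vadd x (vsub xstar x) = xstar by apply vec_ext => i; rewrite /vadd /vsub; ring.
  rewrite E vsub_swap_norm in H.
  have E2 : dot (gF x) (vsub xstar x) = - dot (gF x) (vsub x xstar).
  { rewrite !dot_sub_r. ring. }
  rewrite E2 in H. lra.
Qed.

Lemma tau_le_L d (F : vec d -> R) gF tau L (x xi : vec d) : has_gradient F gF -> grad_lipschitz gF L ->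
  strongly_convex F gF tau -> vnorm xi = 1 -> tau <= L.
Proof.
  move=> HG HL HS Hxi.
  have H1 := HS x xi. have H2 := descent d F gF L x xi HG HL.
  rewrite Hxi in H1 H2. lra.
Qed.

Lemma one_step (r r' Delta G2 gu eu E2 ge Eb tau L lam : R) :
  0 < tau -> 0 < L -> lam = / (8 * L) -> 0 <= Delta ->
  r' = r - 2 * lam * (gu + eu) + lam ^ 2 * (G2 + 2 * ge + E2) ->
  G2 <= 2 * L * Delta -> gu >= Delta + tau / 2 * r ->
  (tau / 2) ^ 2 * r + 2 * (tau / 2) * eu + E2 >= 0 ->
  9 * G2 - 6 * ge + E2 >= 0 -> E2 <= Eb ->
  r' - (4 / tau ^ 2 + 1 / (3 * tau * L)) * Eb <=
    (1 - tau / (16 * L)) * (r - (4 / tau ^ 2 + 1 / (3 * tau * L)) * Eb).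
Proof.
  move=> Ht HL Hlam HD Hr HG2 Hgu Heu Hge HE.
  have Hl : 0 < lam by rewrite Hlam; apply Rinv_0_lt_compat; lra.
  have Hl8 : 8 * L * lam = 1 by rewrite Hlam; field; lra.
  have Q1 : lam ^ 2 * (G2 + 2 * ge + E2) <= lam ^ 2 * (4 * G2 + 4 / 3 * E2).
  { apply Rmult_le_compat_l. nra. lra. }
  have Q2 : lam ^ 2 * (4 * G2) <= lam * Delta.
  { have : lam ^ 2 * (4 * G2) <= lam ^ 2 * (8 * L * Delta) by apply Rmult_le_compat_l; nra.
    have -> : lam ^ 2 * (8 * L * Delta) = lam * Delta * (8 * L * lam) by ring.
    rewrite Hl8. lra. }
  have Q3 : - 2 * lam * eu <= lam * (tau / 2 * r + 2 / tau * E2).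
  { have H : - 2 * eu <= tau / 2 * r + 2 / tau * E2.
    { have : 0 <= (tau / 2) ^ 2 * r + 2 * (tau / 2) * eu + E2 by lra.
      move=> H0.
      have H1 : (tau / 2) ^ 2 * r + 2 * (tau / 2) * eu + E2 = tau / 2 * (tau / 2 * r + 2 * eu + 2 / tau * E2) by field; lra.
      rewrite H1 in H0.
      have : 0 <= tau / 2 * r + 2 * eu + 2 / tau * E2.
      { apply Rmult_le_reg_l with (tau / 2). lra. lra. }
      lra. }
    nra. }
  have Q4 : - 2 * lam * gu <= - 2 * lam * Delta - lam * tau * r by nra.
  have Q5 : r' <= (1 - lam * tau / 2) * r - lam * Delta + (2 * lam / tau + 4 / 3 * lam ^ 2) * E2.
  { rewrite Hr.
    have -> : (2 * lam / tau + 4 / 3 * lam ^ 2) * E2 = lam * (2 / tau * E2) + lam ^ 2 * (4 / 3 * E2) by field; lra.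
    lra. }
  have Q6 : (2 * lam / tau + 4 / 3 * lam ^ 2) * E2 <= (2 * lam / tau + 4 / 3 * lam ^ 2) * Eb.
  { apply Rmult_le_compat_l. have : 0 < 2 * lam / tau by apply Rdiv_lt_0_compat; lra. nra. lra. }
  have E1 : lam * tau / 2 = tau / (16 * L) by rewrite Hlam; field; lra.
  have E3 : (2 * lam / tau + 4 / 3 * lam ^ 2) * Eb = tau / (16 * L) * ((4 / tau ^ 2 + 1 / (3 * tau * L)) * Eb).
  { rewrite Hlam. field. lra. }
  have : 0 <= lam * Delta by nra.
  move=> H0.
  rewrite E1 in Q5. rewrite E3 in Q6. nra.
Qed.

From mathcomp Require Import all_algebra.
From mathcomp Require Import Rstruct.

Lemma kron_sum (n : nat) (g : 'I_n -> R) (j : 'I_n) :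
  \big[Rplus/0]_(k < n) (g k * (if k == j then 1 else 0)) = g j.
Proof.
  rewrite (bigD1 j) //= eqxx big1.
  - change (g j * 1 + 0 = g j). ring.
  - move=> k /negbTE ->. change (g k * 0 = 0). ring.
Qed.

Lemma ortho_key d (Xi : 'I_d -> vec d) : orthonormal_basis Xi ->
  forall j k, \big[Rplus/0]_(i < d) (Xi i j * Xi i k) = if j == k then 1 else 0.
Proof.
  move=> HO.
  pose A : 'M[R]_d := (\matrix_(i, j) Xi i j)%R.
  have H1 : (A *m A^T)%R = 1%:M%R.
  { apply/matrixP => i j. rewrite !mxE.
    have -> : (\sum_(k < d) A i k * A^T k j)%R = dot (Xi i) (Xi j).
    { rewrite /dot. apply: eq_bigr => k _. rewrite !mxE. reflexivity. }
    rewrite HO. by case: (i == j). }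
  have H2 := mulmx1C H1.
  move=> j k.
  have -> : (if j == k then 1 else 0) = ((j == k)%:R)%R by case: (j == k).
  have := congr1 (fun M : 'M[R]_d => M j k) H2. rewrite !mxE => <-.
  apply: eq_bigr => i _. rewrite !mxE. reflexivity.
Qed.

Lemma ortho_complete d (Xi : 'I_d -> vec d) : orthonormal_basis Xi ->
  forall (g : vec d) j, g j = \big[Rplus/0]_(i < d) (dot g (Xi i) * Xi i j).
Proof.
  move=> HO g j.
  rewrite -{1}(kron_sum d g j).
  transitivity (\big[Rplus/0]_(k < d) \big[Rplus/0]_(i < d) (g k * (Xi i k * Xi i j))).
  { apply: eq_bigr => k _. rewrite -(ortho_key d Xi HO k j) big_distrr. reflexivity. }
  rewrite exchange_big. apply: eq_bigr => i _. rewrite /dot big_distrl. apply: eq_bigr => k _ /=.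
  change (g k * (Xi i k * Xi i j) = g k * Xi i k * Xi i j). ring.
Qed.

Lemma dot_vsum_l d n (f : 'I_n -> vec d) y : dot (vsum f) y = \big[Rplus/0]_(i < n) dot (f i) y.
Proof.
  rewrite /dot /vsum.
  transitivity (\big[Rplus/0]_(j < d) \big[Rplus/0]_(i < n) (f i j * y j)).
  { apply: eq_bigr => j _. rewrite big_distrl. reflexivity. }
  rewrite exchange_big. reflexivity.
Qed.

Lemma vnorm_unit d (Xi : 'I_d -> vec d) i : orthonormal_basis Xi -> vnorm (Xi i) = 1.
Proof. move=> HO. rewrite /vnorm HO eqxx. apply sqrt_1. Qed.

Lemma parseval d (Xi : 'I_d -> vec d) (c : 'I_d -> R) : orthonormal_basis Xi ->
  dot (vsum (fun i => vscale (c i) (Xi i))) (vsum (fun i => vscale (c i) (Xi i))) =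
  \big[Rplus/0]_(i < d) (c i * c i).
Proof.
  move=> HO. rewrite dot_vsum_l. apply: eq_bigr => i _.
  rewrite dot_scale_l dot_comm dot_vsum_l.
  rewrite (eq_bigr (fun k => c k * (if k == i then 1 else 0))).
  - rewrite kron_sum. reflexivity.
  - move=> k _. rewrite dot_scale_l HO. reflexivity.
Qed.

Lemma err_vec d (Xi : 'I_d -> vec d) (D : 'I_d -> R) (g : vec d) : orthonormal_basis Xi ->
  vsub (vsum (fun i => vscale (D i) (Xi i))) g = vsum (fun i => vscale (D i - dot g (Xi i)) (Xi i)).
Proof.
  move=> HO. apply vec_ext => j. rewrite /vsub /vsum /vscale.
  rewrite [in X in _ - X = _](ortho_complete d Xi HO g j).
  transitivity (\big[Rplus/0]_(i < d) (D i * Xi i j) + (-1) * \big[Rplus/0]_(i < d) (dot g (Xi i) * Xi i j)).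
  { ring. }
  rewrite -sum_scal -sum_add. apply: eq_bigr => i _. ring.
Qed.

Lemma pow_le1 (s : R) (k : nat) : 0 <= s <= 1 -> s ^ k <= 1.
Proof.
  move=> Hs. elim: k => [|k IH] /=. lra.
  have : 0 <= s ^ k by apply pow_le; lra.
  nra.
Qed.

Lemma pow_sigma_le sigma M : 0 < sigma < 1 -> (1 <= M)%N -> sigma ^ (2 * M - 1) <= sigma.
Proof.
  move=> Hs. case: M => [//|m] _.
  have -> : (2 * m.+1 - 1 = (2 * m).+1)%N by rewrite mulnS add2n subn1.
  simpl. have := pow_le1 sigma (2 * m) ltac:(lra). have : 0 <= sigma ^ (2 * m) by apply pow_le; lra.
  nra.
Qed.

Lemma sq_bound (c p q : R) : 0 <= p -> 0 <= q -> Rabs c <= q + p -> c * c <= 3 * p ^ 2 + 3 / 2 * q ^ 2.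
Proof.
  move=> Hp Hq H. have H1 := Rabs_pos c.
  have -> : c * c = Rabs c * Rabs c.
  { rewrite -Rabs_mult. symmetry. apply Rabs_pos_eq. nra. }
  have H2 : Rabs c * Rabs c <= (q + p) * (q + p) by apply Rmult_le_compat; lra.
  have H3 : 0 <= (2 * p - q) ^ 2 by apply pow2_ge_0.
  nra.
Qed.

Lemma expand_step d (u g e : vec d) lam :
  dot (vsub u (vscale lam (vadd g e))) (vsub u (vscale lam (vadd g e))) =
  dot u u - 2 * lam * (dot g u + dot e u) + lam ^ 2 * (dot g g + 2 * dot g e + dot e e).
Proof.
  rewrite !dot_sub_l !dot_sub_r !dot_scale_l !dot_scale_r !dot_add_l !dot_add_r.
  rewrite (dot_comm _ u g) (dot_comm _ u e) (dot_comm _ e g). ring.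
Qed.

Theorem proposition2 (d M : nat) (F : vec d -> R) (gF : vec d -> vec d)
  (tau L sigma C : R) (xstar : vec d) (nodes : list R)
  (Xi : nat -> 'I_d -> vec d) (x : nat -> vec d) :
  has_gradient F gF ->
  0 < tau -> strongly_convex F gF tau ->
  0 < L -> grad_lipschitz gF L ->
  (forall y, F xstar <= F y) ->
  (1 <= M)%N ->
  0 < sigma < 1 ->
  0 < C ->
  gh_nodes M nodes ->
  (forall (y xi : vec d), vnorm xi = 1 ->
     forall l, gauss_expect (fun v => F (vadd y (vscale (sigma * v) xi)) * v) l ->
     Rabs (gh_deriv M nodes F sigma y xi - l / sigma)
       <= C * (INR (fact M) * sqrt PI / (2 ^ M * INR (fact (2 * M))))
            * sigma ^ (2 * M - 1)) ->
  (forall t, orthonormal_basis (Xi t)) ->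
  (forall t, x (S t) = vsub (x t) (vscale (/ (8 * L)) (dgs M nodes F sigma (Xi t) (x t)))) ->
  forall t, F (x t) - F xstar
    <= 1 / 2 * L * (delta_sigma d M tau L sigma C
         + (1 - tau / (16 * L)) ^ t
           * (vnorm (vsub (x O) xstar) ^ 2 - delta_sigma d M tau L sigma C)).
Proof.
  move=> HG Htau HS HL0 HLip Hmin HM Hsig HC Hnodes Herr HO Hx t.
  set B := C * (INR (fact M) * sqrt PI / (2 ^ M * INR (fact (2 * M)))).
  have HfM := INR_fact_lt_0 M. have Hf2M := INR_fact_lt_0 (2 * M).
  have H2M : 0 < 2 ^ M by apply pow_lt; lra.
  have HPI := PI_RGT_0. have H4M : 0 < 4 ^ M by apply pow_lt; lra.
  have HB0 : 0 <= B.
  { rewrite /B. apply Rmult_le_pos. lra. apply Rmult_le_pos. apply Rmult_le_pos. lra. apply sqrt_pos.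
    left. apply Rinv_0_lt_compat. nra. }
  have HB2 : C ^ 2 * INR (fact M) ^ 2 * PI * INR d / (4 ^ M * INR (fact (2 * M)) ^ 2) = B ^ 2 * INR d.
  { rewrite /B. have -> : 4 ^ M = 2 ^ M * 2 ^ M by rewrite -Rpow_mult_distr; f_equal; ring.
    have E : PI = sqrt PI ^ 2 by rewrite pow2_sqrt; lra.
    rewrite {1}E. field; repeat split; lra. }
  have Gap := fun y => gap_upper d F gF L xstar y HG HLip HL0 Hmin.
  destruct d as [|d'].
  { have Hz : forall y : vec 0, vnorm y = 0.
    { move=> y. rewrite /vnorm /dot big_ord0. apply sqrt_0. }
    have := Gap (x t). rewrite !Hz.
    have -> : delta_sigma 0 M tau L sigma C = 0.
    { rewrite /delta_sigma /=. field; repeat split; lra. }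
    move=> H. have -> : 1 / 2 * L * (0 + (1 - tau / (16 * L)) ^ t * (0 ^ 2 - 0)) = L / 2 * 0 ^ 2 by field.
    exact H. }
  set d := d'.+1.
  set Eb := INR d * (3 * L ^ 2 * sigma ^ 2 + 3 / 2 * B ^ 2 * sigma ^ 2).
  set dl := (4 / tau ^ 2 + 1 / (3 * tau * L)) * Eb.
  set rho := 1 - tau / (16 * L).
  set r := fun t => vnorm (vsub (x t) xstar) ^ 2.
  have Htl : tau <= L.
  { apply (tau_le_L d F gF tau L (x O) (Xi O ord0)); auto. apply vnorm_unit. auto. }
  have Hrho : 0 <= rho <= 1.
  { rewrite /rho. split. have : tau / (16 * L) <= 1. apply Rmult_le_reg_r with (16 * L). lra.
    rewrite /Rdiv Rmult_assoc Rinv_l. lra. lra. lra.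
    have : 0 < tau / (16 * L) by apply Rdiv_lt_0_compat; lra. lra. }
  have Step : forall t, r t.+1 - dl <= rho * (r t - dl).
  { move=> s.
    set xt := x s. set g := gF xt. set Xt := Xi s.
    set D := fun i => gh_deriv M nodes F sigma xt (Xt i).
    set c := fun i => D i - dot g (Xt i).
    set ghat := vsum (fun i => vscale (D i) (Xt i)).
    set e := vsum (fun i => vscale (c i) (Xt i)).
    have He : vsub ghat g = e by apply (err_vec d Xt D g (HO s)).
    have Hghat : ghat = vadd g e.
    { rewrite -He. apply vec_ext => i. rewrite /vadd /vsub. ring. }
    have HE2 : dot e e <= Eb.
    { rewrite /e parseval; last by apply HO.
      rewrite /Eb -sum_const. apply sum_le => i.
      have Hxi : vnorm (Xt i) = 1 by apply vnorm_unit, HO.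
      have [l [Hl Hl2]] := smooth_err d F gF L sigma xt (Xt i) HG HLip ltac:(lra) ltac:(lra) Hxi.
      have Hq := Herr xt (Xt i) Hxi l Hl. rewrite -/B in Hq.
      have Hp := pow_sigma_le sigma M Hsig HM.
      have Hc : Rabs (c i) <= B * sigma + L * sigma.
      { rewrite /c /D. have -> : gh_deriv M nodes F sigma xt (Xt i) - dot g (Xt i) =
          (gh_deriv M nodes F sigma xt (Xt i) - l / sigma) + (l / sigma - dot g (Xt i)) by ring.
        eapply Rle_trans. apply Rabs_triang.
        have HH : B * sigma ^ (2 * M - 1) <= B * sigma by apply Rmult_le_compat_l.
        change (dot g (Xt i)) with (dot (gF xt) (Xt i)).
        apply Rle_trans with (B * sigma ^ (2 * M - 1) + L * sigma).
        apply Rplus_le_compat. exact Hq. exact Hl2.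
        apply Rplus_le_compat_r. exact HH. }
      have := sq_bound (c i) (L * sigma) (B * sigma) ltac:(nra) ltac:(nra) Hc.
      move=> H. eapply Rle_trans. apply H. right. field. }
    have Hxs : x s.+1 = vsub xt (vscale (/ (8 * L)) ghat) by apply Hx.
    set u := vsub xt xstar.
    have Hr' : vsub (x s.+1) xstar = vsub u (vscale (/ (8 * L)) (vadd g e)).
    { rewrite Hxs -Hghat. apply vec_ext => i. rewrite /u /vsub. ring. }
    have Hrs : r s.+1 = dot u u - 2 * (/ (8 * L)) * (dot g u + dot e u)
               + (/ (8 * L)) ^ 2 * (dot g g + 2 * dot g e + dot e e).
    { rewrite /r Hr' vnorm_sq. apply expand_step. }
    have HD : 0 <= F xt - F xstar by have := Hmin xt; lra.
    have HG2 := grad_sq d F gF L xstar xt HG HLip HL0 Hmin.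
    have Hgu := strong_ineq d F gF tau xstar xt HS.
    have Heu := dot_nonneg _ (vadd (vscale (tau / 2) u) e).
    rewrite !dot_add_l !dot_add_r !dot_scale_l !dot_scale_r (dot_comm _ u e) in Heu.
    have Hge := dot_nonneg _ (vsub (vscale 3 g) e).
    rewrite !dot_sub_l !dot_sub_r !dot_scale_l !dot_scale_r (dot_comm _ e g) in Hge.
    have Hru : r s = dot u u by rewrite /r vnorm_sq.
    rewrite Hru.
    have Hgu' : dot g u >= F xt - F xstar + tau / 2 * dot u u.
    { rewrite -vnorm_sq. exact Hgu. }
    have Heu' : (tau / 2) ^ 2 * dot u u + 2 * (tau / 2) * dot e u + dot e e >= 0 by lra.
    have Hge' : 9 * dot g g - 6 * dot g e + dot e e >= 0 by lra.
    exact (one_step (dot u u) (r s.+1) (F xt - F xstar) (dot g g) (dot g u) (dot e u) (dot e e) (dot g e) Eb tau L (/ (8 * L))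
      Htau HL0 erefl HD Hrs HG2 Hgu' Heu' Hge' HE2). }
  have Ind : forall t, r t - dl <= rho ^ t * (r O - dl).
  { elim => [|n IH] /=. lra.
    have := Step n. have : rho * (r n - dl) <= rho * (rho ^ n * (r O - dl)) by apply Rmult_le_compat_l; lra.
    lra. }
  have Hdl : dl <= delta_sigma d M tau L sigma C.
  { rewrite /delta_sigma.
    have -> : C ^ 2 * INR (fact M) ^ 2 * PI * INR d / (4 ^ M * INR (fact (2 * M)) ^ 2) = B ^ 2 * INR d by exact HB2.
    set P := / tau ^ 2. set Q := / (tau * L).
    have HP : 0 < P by apply Rinv_0_lt_compat; nra.
    have HQ : 0 < Q by apply Rinv_0_lt_compat; nra.
    have Hd : 0 <= INR d by apply pos_INR.
    have E1 : dl = INR d * sigma ^ 2 * (12 * (P * L ^ 2) + 6 * (P * B ^ 2) + Q * L ^ 2 + / 2 * (Q * B ^ 2)).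
    { rewrite /dl /Eb /P /Q. field; repeat split; lra. }
    have E2 : (128 / tau ^ 2 + 16 / (tau * L)) * L ^ 2 * INR d * sigma ^ 2 +
      (8 / tau ^ 2 + 1 / (2 * tau * L)) * (B ^ 2 * INR d) * sigma ^ 2 =
      INR d * sigma ^ 2 * (128 * (P * L ^ 2) + 8 * (P * B ^ 2) + 16 * (Q * L ^ 2) + / 2 * (Q * B ^ 2)).
    { rewrite /P /Q. field; repeat split; lra. }
    rewrite E1 E2. apply Rmult_le_compat_l. have := pow2_ge_0 sigma. nra.
    have : 0 <= P * L ^ 2 by have := pow2_ge_0 L; nra.
    have : 0 <= P * B ^ 2 by have := pow2_ge_0 B; nra.
    have : 0 <= Q * L ^ 2 by have := pow2_ge_0 L; nra.
    lra. }
  have Hf := Gap (x t). fold (r t) in Hf.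
  have Hi := Ind t.
  have Hrt : 0 <= rho ^ t <= 1 by split; [apply pow_le; lra | apply pow_le1; lra].
  rewrite -/rho. fold (r O).
  have : r t <= delta_sigma d M tau L sigma C + rho ^ t * (r O - delta_sigma d M tau L sigma C).
  { have H1 : (1 - rho ^ t) * dl <= (1 - rho ^ t) * delta_sigma d M tau L sigma C by apply Rmult_le_compat_l; lra.
    nra. }
  move=> H. have H2 : L / 2 * r t <= L / 2 * (delta_sigma d M tau L sigma C + rho ^ t * (r O - delta_sigma d M tau L sigma C)).
  { apply Rmult_le_compat_l; lra. }
  have -> : 1 / 2 * L = L / 2 by field.
  eapply Rle_trans. exact Hf. exact H2.
Qed.
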